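(* Let $X$ be a compact metric space and suppose $f:X\to X$ is a continuous map that is sensitive, minimal, and has the shadowing property. Then there are a sequence $\alpha$ of prime numbers and a continuous map $\pi:X\to\Delta_\alpha$ such that $g_\alpha\circ\pi=\pi\circ f$ and $\pi$ is one-to-one on a dense subset of $X$.
   Context: $f$ is minimal if $\overline{\{f^n(x):n\ge0\}}=X$ for all $x\in X$. $f$ is sensitive if there is $\delta>0$ such that for every nonempty open $U\subseteq X$ there is $n>0$ with $\mathrm{diam}(f^n(U))>\delta$. A sequence $(x_n)_{n\ge0}$ is a $\delta$-pseudo-orbit if $d(f(x_n),x_{n+1})\le\delta$ for all $n$; $f$ has the shadowing property if for every $\epsilon>0$ there is $\delta>0$ such that for every $\delta$-pseudo-orbit $(x_n)$ there is $y\in X$ with $d(f^n(y),x_n)<\epsilon$ for all $n\ge0$. For $\alpha=(j_1,j_2,\dots)$ with integers $j_i\ge2$, $\Delta_\alpha$ is the set of sequences $(r_1,r_2,\dots)$ with $r_i\in\{0,\dots,j_i-1\}$, with metric $d_\alpha(r,s)=\sum_i\delta(r_i,s_i)/2^i$ ($\delta(a,b)=1$ if $a\ne b$, else $0$), and $g_\alpha:\Delta_\alpha\to\Delta_\alpha$ is the adding machine map $r\mapsto r+(1,0,0,\dots)$, addition being coordinatewise with carry (first coordinate mod $j_1$, carry into the second coordinate taken mod $j_2$, etc.). *)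

(* Defs.v *)
From Stdlib Require Import Reals Znumtheory ZArith Arith List ClassicalEpsilon.
Open Scope R_scope.

Section MetricDefs.
Variable X : Type.
Variable d : X -> X -> R.

Definition is_metric : Prop :=
  (forall x y, 0 <= d x y) /\
  (forall x y, d x y = 0 <-> x = y) /\
  (forall x y, d x y = d y x) /\
  (forall x y z, d x z <= d x y + d y z).

Definition open_set (U : X -> Prop) : Prop :=
  forall x, U x -> exists r, 0 < r /\ forall y, d x y < r -> U y.

Definition compact_space : Prop :=
  forall (I : Type) (U : I -> X -> Prop),
    (forall i, open_set (U i)) ->
    (forall x, exists i, U i x) ->
    exists l : list I, forall x, exists i, In i l /\ U i x.

Definition closure (A : X -> Prop) (y : X) : Prop :=
  forall eps, 0 < eps -> exists a, A a /\ d a y < eps.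

Definition dense (A : X -> Prop) : Prop := forall y, closure A y.

Definition is_diam (A : X -> Prop) (D : R) : Prop :=
  is_lub (fun r => exists x y, A x /\ A y /\ r = d x y) D.

End MetricDefs.

Definition continuous_map {X Y : Type} (dX : X -> X -> R) (dY : Y -> Y -> R)
  (f : X -> Y) : Prop :=
  forall x eps, 0 < eps -> exists delta, 0 < delta /\
    forall y, dX x y < delta -> dY (f x) (f y) < eps.

Fixpoint iter {X : Type} (n : nat) (f : X -> X) (x : X) : X :=
  match n with O => x | S k => f (iter k f x) end.

Definition orbit {X : Type} (f : X -> X) (x : X) (y : X) : Prop :=
  exists n : nat, y = iter n f x.

Definition minimal {X : Type} (d : X -> X -> R) (f : X -> X) : Prop :=
  forall x y, closure X d (orbit f x) y.

Definition image {X : Type} (g : X -> X) (U : X -> Prop) (y : X) : Prop :=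
  exists x, U x /\ y = g x.

Definition sensitive {X : Type} (d : X -> X -> R) (f : X -> X) : Prop :=
  exists delta, 0 < delta /\
    forall U : X -> Prop, open_set X d U -> (exists u, U u) ->
      exists n : nat, (n > 0)%nat /\
        exists D, is_diam X d (image (iter n f) U) D /\ D > delta.

Definition pseudo_orbit {X : Type} (d : X -> X -> R) (f : X -> X)
  (delta : R) (xs : nat -> X) : Prop :=
  forall n, d (f (xs n)) (xs (S n)) <= delta.

Definition shadowing {X : Type} (d : X -> X -> R) (f : X -> X) : Prop :=
  forall eps, 0 < eps -> exists delta, 0 < delta /\
    forall xs, pseudo_orbit d f delta xs ->
      exists y, forall n, d (iter n f y) (xs n) < eps.

(** Odometer Delta_alpha: sequences r : nat -> nat with r i < alpha i.
    Indexing starts at 0 (the paper's coordinate i+1 is our coordinate i). *)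
Definition in_Delta (alpha : nat -> nat) (r : nat -> nat) : Prop :=
  forall i, (r i < alpha i)%nat.

Definition kron (a b : nat) : R := if Nat.eqb a b then 0 else 1.

Definition dalpha_partial (r s : nat -> nat) (n : nat) : R :=
  sum_f_R0 (fun i => kron (r i) (s i) / 2 ^ (S i)) n.

(** d_alpha(r,s) = the (always existing) limit of the series *)
Definition dalpha (r s : nat -> nat) : R :=
  epsilon (inhabits 0) (fun l => Un_cv (dalpha_partial r s) l).

(** carry into coordinate i when adding (1,0,0,...) *)
Fixpoint carry (alpha : nat -> nat) (r : nat -> nat) (i : nat) : bool :=
  match i with
  | O => true
  | S j => andb (carry alpha r j) (Nat.eqb (r j) (alpha j - 1))
  end.

Definition g_alpha (alpha : nat -> nat) (r : nat -> nat) : nat -> nat :=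
  fun i => if carry alpha r i then Nat.modulo (r i + 1) (alpha i) else r i.

(* Main.v *)
From Pilot Require Import Defs.
From Stdlib Require Import Reals Znumtheory ZArith Lia Lra Arith ClassicalEpsilon Classical FunctionalExtensionality.
Open Scope R_scope.
Import Pilot.Defs.

Lemma kron_bounds a b : 0 <= kron a b <= 1.
Proof. unfold kron. destruct (Nat.eqb a b); lra. Qed.

Lemma inv2pow_pos n : 0 < / 2 ^ n.
Proof. apply Rinv_0_lt_compat. apply pow_lt. lra. Qed.

Lemma inv2pow_S n : / 2 ^ (S n) = / 2 * / 2 ^ n.
Proof. simpl. rewrite Rinv_mult. reflexivity. Qed.

Lemma term_bound (r s : nat -> nat) K i :
  (forall j, (j < K)%nat -> r j = s j) ->
  ((i < K)%nat -> kron (r i) (s i) / 2 ^ (S i) = 0) /\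
  0 <= kron (r i) (s i) / 2 ^ (S i) <= / 2 ^ (S i).
Proof.
  intros H. pose proof (kron_bounds (r i) (s i)). pose proof (inv2pow_pos (S i)).
  split.
  - intros Hi. rewrite H by auto. unfold kron. rewrite Nat.eqb_refl. lra.
  - unfold Rdiv. split. apply Rmult_le_pos; lra.
    rewrite <- (Rmult_1_l (/ 2 ^ S i)) at 2. apply Rmult_le_compat_r; lra.
Qed.

Lemma partial_bound (r s : nat -> nat) K : (forall j, (j < K)%nat -> r j = s j) ->
  forall n, dalpha_partial r s n <= / 2 ^ K.
Proof.
  intros H.
  assert (Hinv : forall n, ((S n <= K)%nat /\ dalpha_partial r s n = 0) \/
     ((K <= S n)%nat /\ dalpha_partial r s n <= / 2 ^ K - / 2 ^ (S n))).
  { induction n.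
    - unfold dalpha_partial. simpl sum_f_R0.
      destruct (term_bound r s K 0 H) as [T1 T2].
      destruct K.
      + right. split. lia. simpl pow in *. lra.
      + left. split. lia. apply T1. lia.
    - replace (dalpha_partial r s (S n)) with (dalpha_partial r s n + kron (r (S n)) (s (S n)) / 2 ^ (S (S n))) by reflexivity.
      destruct (term_bound r s K (S n) H) as [T1 T2].
      destruct (Nat.le_gt_cases (S (S n)) K).
      + left. split; auto. destruct IHn as [[_ E]|[E _]]; [|lia].
        rewrite E, T1 by lia. lra.
      + right. split. lia.
        destruct (Nat.eq_dec K (S n)).
        * subst K. assert (E : dalpha_partial r s n <= 0).
          { destruct IHn as [[_ E]|[_ E]]; lra. }
          rewrite (inv2pow_S (S n)). rewrite (inv2pow_S (S n)) in T2.
          pose proof (inv2pow_pos (S n)). lra.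
        * destruct IHn as [[E1 E]|[E1 E]]; [lia|].
          rewrite (inv2pow_S (S n)). rewrite (inv2pow_S (S n)) in T2.
          pose proof (inv2pow_pos (S n)). lra. }
  intros n. destruct (Hinv n) as [[_ E]|[_ E]].
  - rewrite E. left. apply inv2pow_pos.
  - pose proof (inv2pow_pos (S n)). lra.
Qed.

Lemma cv_le (u : nat -> R) l B : Un_cv u l -> (forall n, u n <= B) -> l <= B.
Proof.
  intros Hc Hb. destruct (Rle_or_lt l B); auto.
  destruct (Hc (l - B)) as [N HN]. lra.
  specialize (HN N (le_n N)). specialize (Hb N). unfold Rdist in HN.
  apply Rabs_def2 in HN. lra.
Qed.

Lemma dalpha_le (r s : nat -> nat) K : (forall j, (j < K)%nat -> r j = s j) -> dalpha r s <= / 2 ^ K.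
Proof.
  intros H.
  assert (Hex : exists l, Un_cv (dalpha_partial r s) l).
  { destruct (growing_cv (dalpha_partial r s)) as [l Hl].
    - intros n.
      replace (dalpha_partial r s (S n)) with (dalpha_partial r s n + kron (r (S n)) (s (S n)) / 2 ^ (S (S n))) by reflexivity.
      destruct (term_bound r s 0 (S n)) as [_ T]. intros; lia. lra.
    - exists 1. intros x [n ->]. pose proof (partial_bound r s 0 ltac:(intros; lia) n). simpl in H0. lra.
    - eauto. }
  pose proof (epsilon_spec (inhabits 0) _ Hex). fold (dalpha r s) in H0.
  apply (cv_le _ _ _ H0). apply partial_bound; auto.
Qed.

Lemma exists_K eps : 0 < eps -> exists K, / 2 ^ K < eps.
Proof.
  intros He. destruct (pow_lt_1_zero (/2)) with (y := eps) as [N HN]; auto.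
  rewrite Rabs_pos_eq; lra.
  exists N. specialize (HN N (le_n N)). rewrite pow_inv in HN.
  rewrite Rabs_pos_eq in HN; auto. left. apply inv2pow_pos.
Qed.

Lemma arith1 N a q r : (1 <= N)%nat -> (2 <= a)%nat -> (r < N)%nat -> (q < a)%nat ->
  andb (r =? N - 1)%nat (q =? a - 1)%nat = (N * q + r =? N * a - 1)%nat.
Proof.
  intros HN Ha Hr Hq.
  destruct (Nat.eqb_spec r (N-1)); destruct (Nat.eqb_spec q (a-1)); simpl;
  symmetry; apply Nat.eqb_eq || apply Nat.eqb_neq; nia.
Qed.

Lemma arith2 N a q r : (1 <= N)%nat -> (2 <= a)%nat -> (r < N)%nat -> (q < a)%nat ->
  (if (r =? N - 1)%nat then ((q + 1) mod a)%nat else q) = (((N * q + r + 1) mod (N * a)) / N)%nat.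
Proof.
  intros HN Ha Hr Hq.
  destruct (Nat.eqb_spec r (N-1)).
  - replace (N * q + r + 1)%nat with (N * (q + 1))%nat by nia.
    destruct (Nat.eq_dec (q + 1) a).
    + rewrite e0, Nat.Div0.mod_same, Nat.Div0.mod_same. symmetry. apply Nat.Div0.div_0_l.
    + rewrite !Nat.mod_small by nia. rewrite Nat.mul_comm, Nat.div_mul by lia. reflexivity.
  - rewrite Nat.mod_small by nia.
    replace (N * q + r + 1)%nat with (q * N + (r + 1))%nat by lia.
    rewrite Nat.div_add_l by lia. rewrite Nat.div_small by lia. lia.
Qed.

Lemma iter_add {X} (f : X -> X) (a b : nat) x : iter (a + b)%nat f x = iter a f (iter b f x).
Proof. induction a; simpl; congruence. Qed.

Lemma iter_S' {X} (f : X -> X) (n : nat) x : iter n f (f x) = iter (S n) f x.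
Proof. induction n; simpl; auto. rewrite IHn. reflexivity. Qed.

Lemma le_of_all_eta (A B : R) : (forall e, 0 < e -> A < B + e) -> A <= B.
Proof. intros H. destruct (Rle_or_lt A B); auto. assert (HH: 0 < (A-B)/2) by lra. specialize (H _ HH). lra. Qed.

Lemma mod_mod_div (a m k : nat) : k <> 0%nat -> Nat.divide k m -> ((a mod m) mod k = a mod k)%nat.
Proof.
  intros Hk [t ->].
  destruct (Nat.eq_dec t 0) as [->|Ht]. { replace (0*k)%nat with 0%nat by lia. rewrite Nat.mod_0_r. reflexivity. }
  rewrite (Nat.div_mod_eq a (t*k)) at 2.
  rewrite Nat.add_comm, <- Nat.mul_assoc, (Nat.mul_comm k), Nat.mul_assoc.
  rewrite Nat.Div0.mod_add. reflexivity.
Qed.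

Section Main.
Variable X : Type.
Variable d : X -> X -> R.
Variable f : X -> X.
Hypothesis Hmet : is_metric X d.
Hypothesis Hcont : continuous_map d d f.
Hypothesis Hmin : minimal d f.

Lemma d_pos x y : 0 <= d x y. Proof. apply Hmet. Qed.
Lemma d_refl x : d x x = 0. Proof. apply Hmet. reflexivity. Qed.
Lemma d_sym x y : d x y = d y x. Proof. apply Hmet. Qed.
Lemma d_tri x y z : d x z <= d x y + d y z. Proof. apply Hmet. Qed.
Lemma d_eq x y : d x y = 0 -> x = y. Proof. apply Hmet. Qed.

Lemma iter_cont n : continuous_map d d (iter n f).
Proof.
  induction n; intros x e He; simpl.
  - exists e; split; auto.
  - destruct (Hcont (iter n f x) e He) as [r [Hr H]].
    destruct (IHn x r Hr) as [s [Hs H2]]. exists s; split; auto.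
Qed.

Lemma extend_bound n B y : (forall k, d (iter n f (iter k f y)) (iter k f y) <= B) ->
  forall z, d (iter n f z) z <= B.
Proof.
  intros H z. apply le_of_all_eta. intros e He.
  destruct (iter_cont n z (e/2)) as [r [Hr Hc]]. lra.
  destruct (Hmin y z (Rmin r (e/2))) as [a [[k ->] Ha]].
  { apply Rmin_pos; lra. }
  assert (H1 := Rmin_l r (e/2)). assert (H2 := Rmin_r r (e/2)).
  specialize (Hc (iter k f y)). rewrite d_sym in Ha.
  assert (Hc' : d (iter n f z) (iter n f (iter k f y)) < e/2) by (apply Hc; lra).
  specialize (H k).
  pose proof (d_tri (iter n f z) (iter n f (iter k f y)) z).
  pose proof (d_tri (iter n f (iter k f y)) (iter k f y) z).
  rewrite (d_sym (iter k f y) z) in *. lra.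
Qed.

Definition chain (dl : R) (x y : X) (n : nat) : Prop :=
  exists c : nat -> X, c 0%nat = x /\ c n = y /\ forall i, (i < n)%nat -> d (f (c i)) (c (S i)) < dl.

Lemma chain_refl dl x : chain dl x x 0.
Proof. exists (fun _ => x). split; auto. split; auto. intros; lia. Qed.

Lemma chain_app dl x y z n m : chain dl x y n -> chain dl y z m -> chain dl x z (n + m).
Proof.
  intros [c1 [A1 [B1 C1]]] [c2 [A2 [B2 C2]]].
  exists (fun i => if (i <=? n)%nat then c1 i else c2 (i - n)%nat).
  split; [|split].
  - simpl. auto.
  - destruct (Nat.leb_spec (n+m) n).
    + assert (m = 0%nat) by lia. subst m. rewrite Nat.add_0_r. congruence.
    + replace (n + m - n)%nat with m by lia. auto.
  - intros i Hi. destruct (Nat.leb_spec i n); destruct (Nat.leb_spec (S i) n).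
    + apply C1; lia.
    + assert (i = n) by lia. subst i. replace (S n - n)%nat with 1%nat by lia.
      rewrite B1, <- A2. apply C2. lia.
    + lia.
    + replace (S i - n)%nat with (S (i - n)) by lia. apply C2. lia.
Qed.

Lemma chain_mono dl1 dl2 x y n : dl1 <= dl2 -> chain dl1 x y n -> chain dl2 x y n.
Proof.
  intros Hle [c [A [B C]]]. exists c; split; auto; split; auto.
  intros i Hi; specialize (C i Hi); lra.
Qed.

Lemma chain_step dl x : 0 < dl -> chain dl x (f x) 1.
Proof.
  intros Hdl. exists (fun i => match i with O => x | _ => f x end).
  split; auto; split; auto. intros i Hi. assert (i = 0%nat) by lia. subst. rewrite d_refl. auto.
Qed.

Lemma chain_exists dl x y : 0 < dl -> exists n, (1 <= n)%nat /\ chain dl x y n.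
Proof.
  intros Hdl. destruct (Hmin (f x) y dl Hdl) as [a [[k ->] Ha]].
  exists (S k). split. lia.
  exists (fun i => if (i <=? k)%nat then iter i f x else y).
  split; [reflexivity|split].
  - destruct (Nat.leb_spec (S k) k); [lia|auto].
  - intros i Hi. destruct (Nat.leb_spec i k); destruct (Nat.leb_spec (S i) k).
    + simpl. rewrite d_refl. auto.
    + assert (i = k) by lia. subst i. rewrite iter_S' in Ha. simpl in Ha |- *. auto.
    + lia.
    + lia.
Qed.

Lemma chain_open dl x y n : (1 <= n)%nat -> chain dl x y n ->
  exists r, 0 < r /\ forall y', d y y' < r -> chain dl x y' n.
Proof.
  intros Hn [c [A [B C]]].
  destruct n as [|m]; [lia|].
  pose proof (C m ltac:(lia)) as Cm. rewrite B in Cm.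
  exists (dl - d (f (c m)) y). split. lra.
  intros y' Hy'.
  exists (fun i => if (i =? S m)%nat then y' else c i).
  split; [simpl; auto|split].
  - rewrite Nat.eqb_refl. auto.
  - intros i Hi. destruct (Nat.eqb_spec i (S m)); [lia|].
    destruct (Nat.eqb_spec (S i) (S m)).
    + assert (i = m) by lia. subst i.
      pose proof (d_tri (f (c m)) y y'). lra.
    + apply C; lia.
Qed.


Lemma Sk_mod (n k : nat) : (n <> 0)%nat ->
  (S k mod n = if (S (k mod n) <? n)%nat then S (k mod n) else 0)%nat.
Proof.
  intros Hn.
  assert (E : (S k = S (k mod n) + (k / n) * n)%nat).
  { pose proof (Nat.div_mod_eq k n). lia. }
  rewrite E, Nat.Div0.mod_add.
  pose proof (Nat.mod_upper_bound k n Hn).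
  destruct (Nat.ltb_spec (S (k mod n)) n).
  - apply Nat.mod_small; auto.
  - assert (S (k mod n) = n) as -> by lia. apply Nat.Div0.mod_same.
Qed.

Lemma loop_rigid eps ds dl x n : 0 < eps ->
  (forall xs, pseudo_orbit d f ds xs -> exists y, forall k, d (iter k f y) (xs k) < eps) ->
  dl <= ds -> chain dl x x n -> forall z, d (iter n f z) z <= 2*eps.
Proof.
  intros Heps Hsh Hle Hc.
  destruct n as [|m].
  { intros z. simpl. rewrite d_refl. lra. }
  destruct Hc as [c [A [B C]]].
  set (n := S m) in *.
  assert (Hn : n <> 0%nat) by (unfold n; lia).
  destruct (Hsh (fun k => c (k mod n)%nat)) as [y Hy].
  { intros k. rewrite (Sk_mod n k Hn).
    pose proof (Nat.mod_upper_bound k n Hn).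
    destruct (Nat.ltb_spec (S (k mod n)) n).
    - specialize (C (k mod n)%nat H). lra.
    - assert (S (k mod n) = n) by lia. idtac.
      specialize (C (k mod n)%nat H). rewrite H1, B in C. rewrite A. lra. }
  apply (extend_bound n (2*eps) y). intros k.
  rewrite <- iter_add.
  pose proof (Hy (n + k)%nat). pose proof (Hy k).
  replace ((n+k) mod n)%nat with (k mod n)%nat in H.
  2:{ rewrite Nat.add_comm. replace (k + n)%nat with (k + 1 * n)%nat by lia.
      rewrite Nat.Div0.mod_add. reflexivity. }
  pose proof (d_tri (iter (n+k) f y) (c (k mod n)%nat) (iter k f y)).
  rewrite (d_sym (c _) (iter k f y)) in H1. lra.
Qed.

Variable x0 : X.

Definition Qs dl n := chain dl x0 x0 n.
Definition Hs dl (z : Z) := exists a b, Qs dl a /\ Qs dl b /\ z = (Z.of_nat a - Z.of_nat b)%Z.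

Lemma Qs_add dl a b : Qs dl a -> Qs dl b -> Qs dl (a + b).
Proof. apply chain_app. Qed.

Lemma Hs_0 dl : Hs dl 0%Z.
Proof. exists 0%nat, 0%nat. split; [apply chain_refl|split;[apply chain_refl|reflexivity]]. Qed.

Lemma Hs_add dl z w : Hs dl z -> Hs dl w -> Hs dl (z + w)%Z.
Proof.
  intros [a [b [Ha [Hb ->]]]] [a' [b' [Ha' [Hb' ->]]]].
  exists (a + a')%nat, (b + b')%nat. split; [apply Qs_add; auto|split;[apply Qs_add; auto|lia]].
Qed.

Lemma Hs_opp dl z : Hs dl z -> Hs dl (- z)%Z.
Proof. intros [a [b [Ha [Hb ->]]]]. exists b, a. split; auto. split; auto. lia. Qed.

Lemma Hs_mulnat dl z (k : nat) : Hs dl z -> Hs dl (Z.of_nat k * z)%Z.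
Proof.
  intros H. induction k.
  - simpl. apply Hs_0.
  - replace (Z.of_nat (S k) * z)%Z with (z + Z.of_nat k * z)%Z by lia. apply Hs_add; auto.
Qed.

Lemma Hs_mulZ dl z (k : Z) : Hs dl z -> Hs dl (k * z)%Z.
Proof.
  intros H. destruct (Z_le_gt_dec 0 k).
  - replace k with (Z.of_nat (Z.to_nat k)) by lia. apply Hs_mulnat; auto.
  - replace (k * z)%Z with (- (Z.of_nat (Z.to_nat (- k)) * z))%Z by lia.
    apply Hs_opp. apply Hs_mulnat; auto.
Qed.

Definition Gprop dl (g : nat) := (1 <= g)%nat /\ Hs dl (Z.of_nat g) /\
  forall m, (1 <= m)%nat -> Hs dl (Z.of_nat m) -> (g <= m)%nat.

Definition Gd dl := epsilon (inhabits 0%nat) (Gprop dl).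

Lemma Gd_spec dl : 0 < dl -> Gprop dl (Gd dl).
Proof.
  intros Hdl. unfold Gd. apply epsilon_spec.
  destruct (dec_inh_nat_subset_has_unique_least_element
     (fun m => (1 <= m)%nat /\ Hs dl (Z.of_nat m))) as [g [[[H1 H2] H3] _]].
  - intros n. apply classic.
  - destruct (chain_exists dl x0 x0 Hdl) as [n [Hn Hc]].
    exists n. split; [auto|]. exists n, 0%nat. refine (conj Hc (conj (chain_refl _ _) _)). lia.
  - exists g. split; [auto|split; [auto|]]. intros m Hm Hm'. apply H3. auto.
Qed.

Lemma Gd_pos dl : 0 < dl -> (1 <= Gd dl)%nat.
Proof. intros H. apply (Gd_spec dl H). Qed.

Lemma Gd_div dl z : 0 < dl -> Hs dl z -> (Z.of_nat (Gd dl) | z)%Z.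
Proof.
  intros Hdl Hz. destruct (Gd_spec dl Hdl) as [G1 [G2 G3]].
  set (g := Z.of_nat (Gd dl)) in *.
  assert (Hg : (0 < g)%Z) by (unfold g; lia).
  apply Z.mod_divide. lia.
  pose proof (Z.mod_pos_bound z g Hg).
  assert (Hr : Hs dl (z mod g)%Z).
  { replace (z mod g)%Z with (z + (- (z / g)) * g)%Z.
    - apply Hs_add; auto. apply Hs_mulZ; auto.
    - pose proof (Z_div_mod_eq_full z g). lia. }
  destruct (Z.eq_dec (z mod g) 0); auto.
  exfalso. specialize (G3 (Z.to_nat (z mod g))).
  rewrite Z2Nat.id in G3 by lia. specialize (G3 ltac:(lia) Hr). unfold g in *. lia.
Qed.

Lemma Gd_cong dl n1 n2 : 0 < dl -> Hs dl (Z.of_nat n1 - Z.of_nat n2)%Z ->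
  (n1 mod Gd dl = n2 mod Gd dl)%nat.
Proof.
  intros Hdl H. destruct (Gd_div dl _ Hdl H) as [t Ht].
  apply Nat2Z.inj. rewrite !Nat2Z.inj_mod.
  replace (Z.of_nat n1) with (Z.of_nat n2 + t * Z.of_nat (Gd dl))%Z by lia.
  apply Z_mod_plus_full.
Qed.

Lemma Gd_mono dl1 dl2 : 0 < dl1 -> dl1 <= dl2 -> Nat.divide (Gd dl2) (Gd dl1).
Proof.
  intros H1 H12.
  assert (H2 : 0 < dl2) by lra.
  destruct (Gd_spec dl1 H1) as [A [B C]].
  assert (Hs dl2 (Z.of_nat (Gd dl1))).
  { destruct B as [a [b [Ha [Hb E]]]]. exists a, b.
    split; [eapply chain_mono; eauto|split; [eapply chain_mono; eauto|auto]]. }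
  pose proof (Gd_div dl2 _ H2 H).
  pose proof (Gd_pos dl2 H2).
  apply Nat.mod_divide. lia.
  apply Nat2Z.inj. rewrite Nat2Z.inj_mod. simpl. apply Z.mod_divide; auto. lia.
Qed.

Lemma Gd_rigid eps ds dl : 0 < eps ->
  (forall xs, pseudo_orbit d f ds xs -> exists y, forall k, d (iter k f y) (xs k) < eps) ->
  0 < dl -> dl <= ds -> forall z, d (iter (Gd dl) f z) z <= 4*eps.
Proof.
  intros Heps Hsh Hdl Hle.
  destruct (Gd_spec dl Hdl) as [A [[a [b [Ha [Hb E]]]] C]].
  assert (Ea : a = (Gd dl + b)%nat) by lia.
  apply (extend_bound (Gd dl) (4*eps) (iter b f x0)). intros k.
  replace (iter k f (iter b f x0)) with (iter b f (iter k f x0)).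
  2:{ rewrite <- !iter_add. rewrite Nat.add_comm. reflexivity. }
  rewrite <- iter_add, <- Ea.
  set (u := iter k f x0).
  pose proof (loop_rigid eps ds dl x0 a Heps Hsh Hle Ha u).
  pose proof (loop_rigid eps ds dl x0 b Heps Hsh Hle Hb u).
  pose proof (d_tri (iter a f u) u (iter b f u)). rewrite (d_sym u) in H1. lra.
Qed.


Lemma Zdiv_to_nat a b : a <> 0%nat -> (Z.of_nat a | Z.of_nat b)%Z -> Nat.divide a b.
Proof.
  intros Ha H. apply Nat.mod_divide; auto.
  apply Nat2Z.inj. rewrite Nat2Z.inj_mod. simpl. apply Z.mod_divide; auto. lia.
Qed.

Definition goodI (m : nat) (J : X -> nat) : Prop :=
  (forall x, (J x < m)%nat) /\ J x0 = 0%nat /\ (forall x, J (f x) = ((J x + 1) mod m)%nat) /\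
  (forall x, exists r, 0 < r /\ forall y, d x y < r -> J y = J x).

Lemma good_orbit m J : goodI m J -> forall n, J (iter n f x0) = (n mod m)%nat.
Proof.
  intros [A [B [C D]]]. induction n.
  - simpl. rewrite B. symmetry. apply Nat.Div0.mod_0_l.
  - simpl. rewrite C, IHn. rewrite Nat.Div0.add_mod_idemp_l. f_equal. lia.
Qed.

Lemma good_unique m J J' : goodI m J -> goodI m J' -> forall y, J y = J' y.
Proof.
  intros HJ HJ' y.
  destruct HJ as [A [B [C D]]]. destruct HJ' as [A' [B' [C' D']]].
  destruct (D y) as [r [Hr Hy]]. destruct (D' y) as [r' [Hr' Hy']].
  destruct (Hmin x0 y (Rmin r r')) as [a [[n ->] Ha]]. apply Rmin_pos; auto.
  rewrite d_sym in Ha.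
  pose proof (Rmin_l r r'). pose proof (Rmin_r r r').
  rewrite <- (Hy (iter n f x0)) by lra. rewrite <- (Hy' (iter n f x0)) by lra.
  rewrite (good_orbit m J), (good_orbit m J'); try split; auto; split; auto.
Qed.

Lemma good_div m J k : goodI m J -> k <> 0%nat -> Nat.divide k m -> goodI k (fun x => (J x mod k)%nat).
Proof.
  intros [A [B [C D]]] Hk Hkm. split; [|split; [|split]].
  - intros x. apply Nat.mod_upper_bound; auto.
  - rewrite B. apply Nat.Div0.mod_0_l.
  - intros x. rewrite C. rewrite mod_mod_div; auto. rewrite Nat.Div0.add_mod_idemp_l. reflexivity.
  - intros x. destruct (D x) as [r [Hr H]]. exists r. split; [auto|]. intros y Hy. rewrite H; auto.
Qed.

Definition phase dl y := epsilon (inhabits 0%nat) (fun n => chain dl x0 y n).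

Lemma phase_spec dl y : 0 < dl -> chain dl x0 y (phase dl y).
Proof.
  intros Hdl. unfold phase. apply epsilon_spec.
  destruct (chain_exists dl x0 y Hdl) as [n [_ H]]. eauto.
Qed.

Lemma phase_wd dl y n1 n2 : 0 < dl -> chain dl x0 y n1 -> chain dl x0 y n2 ->
  (n1 mod Gd dl = n2 mod Gd dl)%nat.
Proof.
  intros Hdl H1 H2. destruct (chain_exists dl y x0 Hdl) as [k [_ Hk]].
  assert (Hs dl (Z.of_nat (n1 + k) - Z.of_nat (n2 + k))%Z).
  { exists (n1 + k)%nat, (n2 + k)%nat. split; [eapply chain_app; eauto|split;[eapply chain_app; eauto|auto]]. }
  pose proof (Gd_cong dl _ _ Hdl H).
  replace n1 with ((n1 + k) - k)%nat by lia. replace n2 with ((n2 + k) - k)%nat by lia.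
  apply Nat2Z.inj. rewrite !Nat2Z.inj_mod.
  assert (Hg : (0 < Z.of_nat (Gd dl))%Z) by (pose proof (Gd_pos dl Hdl); lia).
  apply (f_equal Z.of_nat) in H0. rewrite !Nat2Z.inj_mod in H0.
  rewrite !Nat2Z.inj_sub by lia.
  rewrite Zminus_mod, (Zminus_mod (Z.of_nat (n2 + k))), H0. reflexivity.
Qed.

Definition Iph dl y := (phase dl y mod Gd dl)%nat.

Lemma Iph_good dl : 0 < dl -> goodI (Gd dl) (Iph dl).
Proof.
  intros Hdl. pose proof (Gd_pos dl Hdl) as Hg.
  split; [|split; [|split]].
  - intros x. apply Nat.mod_upper_bound. lia.
  - unfold Iph. rewrite (phase_wd dl x0 _ 0 Hdl (phase_spec dl x0 Hdl) (chain_refl dl x0)).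
    apply Nat.Div0.mod_0_l.
  - intros x. unfold Iph.
    assert (chain dl x0 (f x) (phase dl x + 1)).
    { apply chain_app with x. apply phase_spec; auto. apply chain_step; auto. }
    rewrite (phase_wd dl (f x) _ _ Hdl (phase_spec dl (f x) Hdl) H).
    rewrite Nat.Div0.add_mod_idemp_l. reflexivity.
  - intros x. destruct (chain_exists dl x0 x Hdl) as [n [Hn Hc]].
    destruct (chain_open dl x0 x n Hn Hc) as [r [Hr H]].
    exists r. split; auto. intros y Hy. unfold Iph.
    rewrite (phase_wd dl y _ n Hdl (phase_spec dl y Hdl) (H y Hy)).
    rewrite (phase_wd dl x _ n Hdl (phase_spec dl x Hdl) Hc). reflexivity.
Qed.

Lemma iter_period N : (N <> 0)%nat -> (forall z, iter N f z = z) ->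
  forall n z, iter n f z = iter (n mod N) f z.
Proof.
  intros HN H n z.
  assert (Hq : forall q z, iter (q * N) f z = z).
  { induction q; intros w; simpl; auto. rewrite iter_add, IHq. apply H. }
  rewrite (Nat.div_mod_eq n N) at 1.
  rewrite Nat.add_comm, iter_add, Nat.mul_comm, Hq. reflexivity.
Qed.

Lemma equicont e x N : 0 < e -> exists r, 0 < r /\
  forall k y, (k < N)%nat -> d x y < r -> d (iter k f x) (iter k f y) < e.
Proof.
  intros He. induction N.
  - exists 1. split. lra. intros; lia.
  - destruct IHN as [r [Hr H]].
    destruct (iter_cont N x e He) as [s [Hs Hc]].
    exists (Rmin r s). split. apply Rmin_pos; auto.
    intros k y Hk Hy. pose proof (Rmin_l r s). pose proof (Rmin_r r s).
    destruct (Nat.eq_dec k N). subst. apply Hc. lra. apply H. lia. lra.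
Qed.

Lemma not_periodic N : (1 <= N)%nat -> (forall z, iter N f z = z) -> sensitive d f -> False.
Proof.
  intros HN Hp [dlt [Hdlt Hs]].
  destruct (equicont (dlt/2) x0 N) as [r [Hr Heq]]. lra.
  destruct (Hs (fun y => d x0 y < r)) as [n [Hn [D [HD HDgt]]]].
  - intros y Hy. exists (r - d x0 y). split. lra. intros z Hz.
    pose proof (d_tri x0 y z). lra.
  - exists x0. rewrite d_refl. auto.
  - destruct HD as [_ HD].
    assert (D <= dlt); [|lra].
    apply HD. intros v [a [b [[u [Hu ->]] [[w [Hw ->]] ->]]]].
    rewrite (iter_period N ltac:(lia) Hp n u), (iter_period N ltac:(lia) Hp n w).
    assert (Hk : (n mod N < N)%nat) by (apply Nat.mod_upper_bound; lia).
    pose proof (Heq _ u Hk Hu). pose proof (Heq _ w Hk Hw).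
    pose proof (d_tri (iter (n mod N) f u) (iter (n mod N) f x0) (iter (n mod N) f w)).
    rewrite d_sym in H. lra.
Qed.

Lemma divide_fact g M : (1 <= g <= M)%nat -> Nat.divide g (fact M).
Proof.
  induction M; intros H. lia.
  replace (fact (S M)) with (S M * fact M)%nat by reflexivity. destruct (Nat.eq_dec g (S M)).
  - subst. apply Nat.divide_factor_l.
  - apply Nat.divide_mul_r. apply IHM. lia.
Qed.

Hypothesis Hshad : shadowing d f.
Hypothesis Hsens : sensitive d f.

Lemma iter_mult_bound g B : (forall w, d (iter g f w) w <= B) ->
  forall t z, d (iter (t * g) f z) z <= INR t * B.
Proof.
  intros H t. induction t; intros z.
  - simpl. rewrite d_refl. lra.
  - simpl Nat.mul. rewrite iter_add. rewrite S_INR.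
    pose proof (d_tri (iter g f (iter (t * g) f z)) (iter (t*g) f z) z).
    pose proof (H (iter (t * g) f z)). pose proof (IHt z). lra.
Qed.

Lemma unbounded dl M : 0 < dl -> exists dl', 0 < dl' /\ dl' <= dl /\ (M < Gd dl')%nat.
Proof.
  intros Hdl. apply NNPP. intros Hno.
  assert (HG : forall dl', 0 < dl' -> dl' <= dl -> (Gd dl' <= M)%nat).
  { intros dl' H1 H2. apply Nat.nlt_ge. intros H3. apply Hno. eauto. }
  apply (not_periodic (fact M)). pose proof (lt_O_fact M). lia. 2: auto.
  intros z. apply d_eq.
  assert (Hb : forall eps, 0 < eps -> d (iter (fact M) f z) z <= INR (fact M) * (4 * eps)).
  { intros eps Heps. destruct (Hshad eps Heps) as [ds [Hds Hsh]].
    set (dl' := Rmin dl ds).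
    assert (0 < dl') by (apply Rmin_pos; auto).
    pose proof (Rmin_l dl ds). pose proof (Rmin_r dl ds).
    pose proof (HG dl' H ltac:(unfold dl'; lra)).
    pose proof (Gd_pos dl' H).
    destruct (divide_fact (Gd dl') M ltac:(lia)) as [t Ht].
    pose proof (iter_mult_bound (Gd dl') (4*eps) (Gd_rigid eps ds dl' Heps Hsh H ltac:(unfold dl'; lra)) t z) as Hm.
    rewrite <- Ht in Hm.
    assert (INR t <= INR (fact M)). { apply le_INR. rewrite Ht. nia. }
    apply Rle_trans with (INR t * (4*eps)); auto. apply Rmult_le_compat_r; lra. }
  pose proof (d_pos (iter (fact M) f z) z).
  set (C := INR (fact M)) in *. assert (0 <= C) by (apply pos_INR).
  destruct (Rle_lt_or_eq_dec 0 _ H); auto. exfalso.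
  set (A := d (iter (fact M) f z) z) in *.
  assert (Hc : 0 < A / (8 * (C + 1))).
  { apply Rdiv_lt_0_compat; lra. }
  specialize (Hb _ Hc).
  assert (C * (4 * (A / (8 * (C + 1)))) < A).
  { replace (C * (4 * (A / (8 * (C + 1))))) with (A * (C / (2 * (C + 1)))) by (field; lra).
    assert (C / (2 * (C+1)) < 1). { apply Rmult_lt_reg_r with (2 * (C+1)). lra.
      unfold Rdiv. rewrite Rmult_assoc, Rinv_l by lra. lra. }
    nra. }
  lra.
Qed.

Lemma prime_div_exists q : (2 <= q)%nat -> exists p, prime (Z.of_nat p) /\ Nat.divide p q.
Proof.
  induction q as [q IH] using lt_wf_ind. intros Hq.
  destruct (classic (prime (Z.of_nat q))).
  - exists q. split; auto. apply Nat.divide_refl.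
  - destruct (not_prime_divide (Z.of_nat q) ltac:(lia) H) as [n [Hn Hd]].
    destruct (IH (Z.to_nat n) ltac:(lia) ltac:(lia)) as [p [Hp Hpn]].
    exists p. split; auto. apply Nat.divide_trans with (Z.to_nat n); auto.
    apply Zdiv_to_nat. lia. rewrite Z2Nat.id by lia. auto.
Qed.

Lemma step_lemma dl N : 0 < dl -> (1 <= N)%nat -> Nat.divide N (Gd dl) ->
  exists dl' p, 0 < dl' /\ dl' <= dl /\ prime (Z.of_nat p) /\ Nat.divide (N * p) (Gd dl').
Proof.
  intros Hdl HN Hdiv.
  destruct (unbounded dl (Gd dl) Hdl) as [dl' [H1 [H2 H3]]].
  pose proof (Gd_mono dl' dl H1 H2) as Hm.
  assert (Hd : Nat.divide N (Gd dl')) by (eapply Nat.divide_trans; eauto).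
  pose proof (Nat.divide_pos_le _ _ (Gd_pos dl Hdl) Hdiv).
  destruct Hd as [q Hq].
  destruct (prime_div_exists q) as [p [Hp Hpq]].
  { destruct (Nat.le_gt_cases 2 q); auto. assert (q <= 1)%nat by lia. nia. }
  exists dl', p. split; auto. split; auto. split; auto.
  rewrite Hq, (Nat.mul_comm q N). apply Nat.mul_divide_mono_l. auto.
Qed.


Definition nxtP (s r : R * nat) : Prop := 0 < fst r /\ fst r <= fst s /\ prime (Z.of_nat (snd r)) /\
  Nat.divide (snd s * snd r) (Gd (fst r)).

Definition nxt (s : R * nat) : R * nat := epsilon (inhabits (0, 0%nat)) (nxtP s).

Fixpoint sq (k : nat) : R * nat :=
  match k with
  | O => (1, 1%nat)
  | S j => (fst (nxt (sq j)), (snd (sq j) * snd (nxt (sq j)))%nat)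
  end.

Definition alph (k : nat) : nat := snd (nxt (sq k)).
Definition Nk (k : nat) : nat := snd (sq k).

Lemma nxt_spec s : 0 < fst s -> (1 <= snd s)%nat -> Nat.divide (snd s) (Gd (fst s)) -> nxtP s (nxt s).
Proof.
  intros H1 H2 H3. unfold nxt. apply epsilon_spec.
  destruct (step_lemma (fst s) (snd s) H1 H2 H3) as [dl' [p [A [B [C D]]]]].
  exists (dl', p). unfold nxtP. simpl. auto.
Qed.

Lemma sq_inv k : 0 < fst (sq k) /\ (1 <= Nk k)%nat /\ Nat.divide (Nk k) (Gd (fst (sq k))) /\
  prime (Z.of_nat (alph k)).
Proof.
  induction k.
  - assert (H : 0 < fst (sq 0)) by (simpl; lra).
    assert (H2 : (1 <= Nk 0)%nat) by (unfold Nk; simpl; lia).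
    assert (H3 : Nat.divide (Nk 0) (Gd (fst (sq 0)))) by (unfold Nk; simpl; apply Nat.divide_1_l).
    split; [auto|split;[auto|split;[auto|]]]. exact (proj1 (proj2 (proj2 (nxt_spec (sq 0) H H2 H3)))).
  - destruct IHk as [A [B [C D]]].
    destruct (nxt_spec (sq k) A B C) as [E [F [G H]]].
    pose proof (prime_ge_2 _ G).
    assert (A' : 0 < fst (sq (S k))) by (simpl; auto).
    assert (B' : (1 <= Nk (S k))%nat) by (unfold Nk in *; simpl; nia).
    assert (C' : Nat.divide (Nk (S k)) (Gd (fst (sq (S k))))) by (unfold Nk in *; simpl; auto).
    split; [auto|split;[auto|split;[auto|]]]. exact (proj1 (proj2 (proj2 (nxt_spec (sq (S k)) A' B' C')))).
Qed.

Lemma alph_ge2 k : (2 <= alph k)%nat.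
Proof. pose proof (prime_ge_2 _ (proj2 (proj2 (proj2 (sq_inv k))))). lia. Qed.

Lemma Nk_S k : Nk (S k) = (Nk k * alph k)%nat.
Proof. reflexivity. Qed.

Lemma Nk_pos k : (1 <= Nk k)%nat.
Proof. apply sq_inv. Qed.

Lemma Nk_ge k : (S k <= Nk k)%nat.
Proof. induction k. apply Nk_pos. rewrite Nk_S. pose proof (alph_ge2 k). nia. Qed.

Lemma Nk_div j k : (j <= k)%nat -> Nat.divide (Nk j) (Nk k).
Proof.
  induction 1. apply Nat.divide_refl. rewrite Nk_S. apply Nat.divide_mul_l. auto.
Qed.

Definition Ik (k : nat) (x : X) : nat := (Iph (fst (sq k)) x mod Nk k)%nat.

Lemma Ik_good k : goodI (Nk k) (Ik k).
Proof.
  destruct (sq_inv k) as [A [B [C D]]].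
  apply (good_div (Gd (fst (sq k)))). apply Iph_good; auto. lia. auto.
Qed.

Lemma Ik_compat j k x : (j <= k)%nat -> (Ik k x mod Nk j)%nat = Ik j x.
Proof.
  intros H. apply (good_unique (Nk j) (fun y => (Ik k y mod Nk j)%nat) (Ik j)).
  - apply (good_div (Nk k)). apply Ik_good. pose proof (Nk_pos j). lia. apply Nk_div; auto.
  - apply Ik_good.
Qed.

Definition pix (x : X) (i : nat) : nat := (Ik (S i) x / Nk i)%nat.

Lemma Ik_decomp i x : Ik (S i) x = (Nk i * pix x i + Ik i x)%nat.
Proof.
  unfold pix. rewrite <- (Ik_compat i (S i) x) by lia. apply Nat.div_mod_eq.
Qed.

Lemma pix_lt x i : (pix x i < alph i)%nat.
Proof.
  unfold pix. pose proof (Nk_pos i). apply Nat.Div0.div_lt_upper_bound.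
  rewrite <- Nk_S. apply Ik_good.
Qed.

Lemma carry_pix x i : carry alph (pix x) i = (Ik i x =? Nk i - 1)%nat.
Proof.
  induction i.
  - pose proof (proj1 (Ik_good 0) x). simpl carry.
    destruct (Nat.eqb_spec (Ik 0 x) (Nk 0 - 1)); auto. unfold Nk in *. simpl in *. lia.
  - simpl. rewrite IHi. rewrite Ik_decomp, Nk_S.
    apply arith1. apply Nk_pos. apply alph_ge2. apply Ik_good. apply pix_lt.
Qed.

Lemma g_pix x : g_alpha alph (pix x) = pix (f x).
Proof.
  apply functional_extensionality. intros i. unfold g_alpha. rewrite carry_pix.
  change (pix (f x) i) with (Ik (S i) (f x) / Nk i)%nat. rewrite (proj1 (proj2 (proj2 (Ik_good (S i))))).
  rewrite Ik_decomp, Nk_S.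
  apply arith2. apply Nk_pos. apply alph_ge2. apply Ik_good. apply pix_lt.
Qed.

Lemma pix_in x : in_Delta alph (pix x).
Proof. intros i. apply pix_lt. Qed.

Lemma pix_cont : continuous_map d dalpha pix.
Proof.
  intros x eps Heps. destruct (exists_K eps Heps) as [K HK].
  destruct (proj2 (proj2 (proj2 (Ik_good K))) x) as [r [Hr H]].
  exists r. split; auto. intros y Hy.
  apply Rle_lt_trans with (/ 2 ^ K); auto. apply dalpha_le.
  intros j Hj. unfold pix. rewrite <- (Ik_compat (S j) K x), <- (Ik_compat (S j) K y) by lia.
  rewrite (H y Hy). reflexivity.
Qed.

Lemma pix_inj_Ik x y : pix x = pix y -> forall k, Ik k x = Ik k y.
Proof.
  intros E k. induction k.
  - pose proof (proj1 (Ik_good 0) x). pose proof (proj1 (Ik_good 0) y).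
    unfold Nk in *; simpl in *. lia.
  - rewrite !Ik_decomp, IHk, E. reflexivity.
Qed.

Lemma pix_inj x y : orbit f x0 x -> orbit f x0 y -> pix x = pix y -> x = y.
Proof.
  intros [a ->] [b ->] E.
  pose proof (pix_inj_Ik _ _ E (a + b)%nat).
  rewrite !(good_orbit (Nk (a+b))) in H by apply Ik_good.
  pose proof (Nk_ge (a + b)).
  rewrite !Nat.mod_small in H by lia. subst. reflexivity.
Qed.

End Main.

Theorem theorem4p11 (X : Type) (d : X -> X -> R) (f : X -> X)
  (Hmet : is_metric X d) (Hcpt : compact_space X d)
  (Hcont : continuous_map d d f)
  (Hsens : sensitive d f) (Hmin : minimal d f) (Hshad : shadowing d f) :
  exists alpha : nat -> nat,
    (forall i, prime (Z.of_nat (alpha i))) /\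
    exists pi : X -> (nat -> nat),
      (forall x, in_Delta alpha (pi x)) /\
      continuous_map d dalpha pi /\
      (forall x, g_alpha alpha (pi x) = pi (f x)) /\
      exists D : X -> Prop, dense X d D /\
        (forall x y, D x -> D y -> pi x = pi y -> x = y).
Proof.
  destruct (classic (inhabited X)) as [[x0]|Hne].
  - exists (alph X d f x0).
    split. { intros i. eapply sq_inv; eauto. }
    exists (pix X d f x0).
    split. { eapply pix_in; eauto. }
    split. { eapply pix_cont; eauto. }
    split. { intros x; eapply g_pix; eauto. }
    exists (orbit f x0). split.
    + intros y. apply Hmin.
    + intros x y Hx Hy. eapply pix_inj; eauto.
  - exists (fun _ => 2%nat). split. { intros. apply prime_2. }
    exists (fun _ _ => 0%nat). split. { intros x. exfalso. apply Hne. constructor. auto. }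
    split. { intros x. exfalso. apply Hne. constructor. auto. }
    split. { intros x. exfalso. apply Hne. constructor. auto. }
    exists (fun _ => False). split.
    + intros y. exfalso. apply Hne. constructor. auto.
    + intros x. exfalso. apply Hne. constructor. auto.
Qed.
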